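(* Let $(S_N)$ be real random variables, $a,I(a)\in\mathbb R$, $r\in\mathbb N$, and let $P_m$ ($0\le m\le\lfloor r/2\rfloor$) be polynomials. Suppose $(f_k)_{k\ge1}\subset\mathfrak F^1_{r+1}$ and a function $f$ satisfy: (a) there is $C>0$ with $C^1_{r+1}(f_k)\le C$ for all $k$; (b) the $f_k$ are uniformly bounded in $L^\infty(\mathbb R)$; (c) $f_k\to f$ pointwise; (d) for all $m$, $\lim_{k\to\infty}\int P_m(s)f_k(s)\,ds=\int P_m(s)f(s)\,ds$; (e) there exist $N_0$ and a function $\varepsilon(N)$, independent of $k$, with $N^{(r+1)/2}\varepsilon(N)\to0$, such that for all $N>N_0$ and all $k$, $$\Big|\mathbb E\big(f_k(S_N-aN)\big)e^{I(a)N}-\sum_{m=0}^{\lfloor r/2\rfloor}\frac{1}{N^{m+1/2}}\int_{\mathbb R}P_m(s)f_k(s)\,ds\Big|\le C^1_r(f_k)\,\varepsilon(N).$$ Then for $N>N_0$, $$\mathbb E\big(f(S_N-aN)\big)e^{I(a)N}=\sum_{m=0}^{\lfloor r/2\rfloor}\frac{1}{N^{m+1/2}}\int P_m(s)f(s)\,ds+C\cdot o\big(N^{-\frac{r+1}{2}}\big),$$ i.e. the difference is bounded in absolute value by $C\varepsilon(N)$.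
   Context: $C^m_k(f)=\max_{0\le j\le m}\|f^{(j)}\|_{L^1}+\max_{0\le j\le k}\|x^jf\|_{L^1}$ and $\mathfrak F^m_k=\{f\in C^m(\mathbb R):C^m_k(f)<\infty\}$. *)

(* Defs.v *)
From HB Require Import structures.
From mathcomp Require Import all_boot all_order all_algebra.
From mathcomp Require Import all_classical all_reals all_analysis.
Set Implicit Arguments. Unset Strict Implicit. Unset Printing Implicit Defensive.
Import Order.TTheory GRing.Theory Num.Theory.
Import numFieldNormedType.Exports.
Local Open Scope classical_set_scope.
Local Open Scope ring_scope.

Section Defs.
Variable R : realType.

Definition L1norm (g : R -> R) : \bar R :=
  (\int[@lebesgue_measure R]_x (`|g x|)%:E)%E.

Definition Cmk (m k : nat) (f : R -> R) : \bar R :=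
  (\big[maxe/0%E]_(j < m.+1) L1norm (derive1n j f) +
   \big[maxe/0%E]_(j < k.+1) L1norm (fun x => (x ^+ j * f x)%R))%E.

Definition Cm (m : nat) (f : R -> R) : Prop :=
  (forall j, (j < m)%N -> forall x, derivable (derive1n j f) x 1) /\
  continuous (derive1n m f).

Definition Fmk (m k : nat) : set (R -> R) :=
  [set f | Cm m f /\ (Cmk m k f < +oo)%E].
End Defs.

(* Main.v *)
Require Import Defs.
From HB Require Import structures.
From mathcomp Require Import all_boot all_order all_algebra.
From mathcomp Require Import all_classical all_reals all_analysis.
From mathcomp Require Import lra measurable_realfun.
Import Order.TTheory GRing.Theory Num.Theory.
Import numFieldNormedType.Exports.
Local Open Scope classical_set_scope.
Local Open Scope ring_scope.

Lemma bigmaxe_mono (R : realType) n (F : nat -> \bar R) :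
  (\big[maxe/0%E]_(j < n.+1) F j <= \big[maxe/0%E]_(j < n.+2) F j)%E.
Proof.
elim: n F => [|n IH] F.
  rewrite !big_ord_recl !big_ord0 ge_max !Order.TotalTheory.le_max lexx /=.
  by rewrite lexx !orbT.
rewrite big_ord_recl [X in (_ <= X)%E]big_ord_recl ge_max Order.TotalTheory.le_max lexx /=.
rewrite Order.TotalTheory.le_max; apply/orP; right.
exact: (IH (fun j => F j.+1)).
Qed.

Lemma ae_bound_cont (R : realType) (h : R -> R) (M : R) :
  continuous h -> {ae @lebesgue_measure R, forall x, `|h x| <= M} ->
  forall x, `|h x| <= M.
Proof.
move=> ch [B [mB B0 sB]] x; rewrite leNgt; apply/negP => Mx.
have cn : (fun y => `|h y|) @ x --> `|h x|.
  by apply: cvg_norm; exact: ch.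
move: cn => /cvgr_gt /(_ _ Mx).
move=> /nbhs_ballP[e /= e0 He].
have sub : `](x - e), (x + e)[ `<=` B.
  move=> y /=; rewrite in_itv /= => /andP[h1 h2].
  apply: sB => /= hy; move: hy; apply/negP; rewrite -ltNge; apply: He.
  rewrite /ball /= ltr_norml; apply/andP; split; lra.
have H1 : (@lebesgue_measure R (`](x - e)%R, (x + e)%R[ : set R) <= @lebesgue_measure R B)%E.
  by apply: le_measure => //; rewrite inE //; exact: measurable_itv.
move: H1; rewrite B0 lebesgue_measure_itv /= ifT; last by rewrite lte_fin; lra.
by rewrite -EFinB lee_fin; lra.
Qed.

Theorem lemma3p3 (R : realType) (d : measure_display) (Omega : measurableType d)
  (Pr : probability Omega R) (S : nat -> Omega -> R)
  (a Ia : R) (r : nat) (P : nat -> {poly R})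
  (fk : nat -> R -> R) (f : R -> R) (C : R) (N0 : nat) (eps : nat -> R) :
  (forall N, measurable_fun setT (S N)) ->
  (forall k, fk k \in Fmk 1 r.+1) ->
  (* (a) *)
  0 < C -> (forall k, (Cmk 1 r.+1 (fk k) <= C%:E)%E) ->
  (* (b) *)
  (exists M : R, forall k,
      {ae @lebesgue_measure R, forall x, `|fk k x| <= M}) ->
  (* (c) *)
  (forall x, fk k x @[k --> \oo] --> f x) ->
  (* integrals appearing in (d), (e) and the conclusion are finite *)
  (forall m, (m <= r./2)%N -> forall k,
      (@lebesgue_measure R).-integrable setT
        (fun s => ((P m).[s] * fk k s)%:E)) ->
  (forall m, (m <= r./2)%N ->
      (@lebesgue_measure R).-integrable setT
        (fun s => ((P m).[s] * f s)%:E)) ->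
  (* (d) *)
  (forall m, (m <= r./2)%N ->
      Rintegral (@lebesgue_measure R) setT (fun s => (P m).[s] * fk k s)
        @[k --> \oo] -->
      Rintegral (@lebesgue_measure R) setT (fun s => (P m).[s] * f s)) ->
  (* (e) *)
  (forall N, (N0 < N)%N -> 0 <= eps N) ->
  ((N%:R `^ ((r.+1)%:R / 2)) * eps N @[N --> \oo] --> (0 : R)) ->
  (forall N, (N0 < N)%N -> forall k,
      `| Rintegral Pr setT (fun w => fk k (S N w - a * N%:R)) * expR (Ia * N%:R)
         - \sum_(m < r./2.+1)
             (N%:R `^ (m%:R + 2^-1))^-1 *
             Rintegral (@lebesgue_measure R) setT (fun s => (P m).[s] * fk k s) |
      <= fine (Cmk 1 r (fk k)) * eps N) ->
  (* conclusion *)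
  forall N, (N0 < N)%N ->
      `| Rintegral Pr setT (fun w => f (S N w - a * N%:R)) * expR (Ia * N%:R)
         - \sum_(m < r./2.+1)
             (N%:R `^ (m%:R + 2^-1))^-1 *
             Rintegral (@lebesgue_measure R) setT (fun s => (P m).[s] * f s) |
      <= C * eps N.
Proof.
move=> mS fkF C0 fkC [M hM] fkf iPk iPf dlim eps0 _ hE N NN0.
have cfk k : continuous (fk k).
  move: (fkF k); rewrite inE => -[[hd _] _] x.
  apply: differentiable_continuous; rewrite -derivable1_diffP.
  exact: (hd 0%N isT x).
have bk k x : `|fk k x| <= M := @ae_bound_cont R _ _ (cfk k) (hM k) x.
have bf x : `|f x| <= M.
  apply: (cvgr_to_le (cvg_norm (fkf x))).
  by apply: nearW => k; exact: bk.
have Ck k : fine (Cmk 1 r (fk k)) <= C.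
  suff : (Cmk 1 r (fk k) <= C%:E)%E.
    by case: (Cmk 1 r (fk k)) => //= _; exact: ltW.
  apply: le_trans (fkC k); rewrite /Cmk; apply: leeD2l.
  exact: (@bigmaxe_mono R r (fun j : nat => L1norm (fun x : R => x ^+ j * fk k x))).
pose g k w := fk k (S N w - a * N%:R).
pose gf w := f (S N w - a * N%:R).
have mg k : measurable_fun setT (g k).
  apply: measurableT_comp; first exact: measurable_realfun.continuous_measurable_fun.
  exact: measurable_realfun.measurable_funB.
have gcvg w : (fun k => (g k w)%:E) @ \oo --> (gf w)%:E.
  apply: cvg_EFin; first exact: nearW.
  exact: fkf.
have mgf : measurable_fun [set: Omega] (fun w => (gf w)%:E : \bar R).
  apply: (measurable_realfun.emeasurable_fun_cvg (fun k w => (g k w)%:E)) => //.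
  by move=> k; apply/measurable_EFinP.
have mg' k : measurable_fun [set: Omega] (fun w => (g k w)%:E : \bar R).
  by apply/measurable_EFinP.
have gae : \forall x \ae Pr, [set: Omega] x ->
    ((fun k => (g k x)%:E) @ \oo --> (gf x)%:E).
  by apply: aeW => w _; exact: gcvg.
have bae : \forall x \ae Pr, forall k, [set: Omega] x ->
    (`|(g k x)%:E| <= (EFin \o cst M) x)%E.
  by apply: aeW => w k _ /=; rewrite lee_fin; exact: bk.
have [igf _ hcvg] := @dominated_convergence _ _ _ Pr setT measurableT
  (fun k w => (g k w)%:E) (fun w => (gf w)%:E) (EFin \o cst M)
  mg' mgf gae (finite_measure_integrable_cst _ _ measurableT) bae.
have Acvg : Rintegral Pr setT (g k) @[k --> \oo] --> Rintegral Pr setT gf.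
  apply: (fine_cvg (f := fun k => (\int[Pr]_(x in setT) (g k x)%:E)%E)).
  rewrite /Rintegral fineK //; exact: integrable_fin_num.
apply: (cvgr_to_le (F := \oo) (f := fun k =>
   `| Rintegral Pr setT (g k) * expR (Ia * N%:R)
         - \sum_(m < r./2.+1)
             (N%:R `^ (m%:R + 2^-1))^-1 *
             Rintegral (@lebesgue_measure R) setT (fun s => (P m).[s] * fk k s) |)).
  apply: cvg_norm; apply: cvgB; first exact: cvgMl.
  apply: cvg_big => //; first exact: add_continuous.
  move=> m _; apply: cvgM; first exact: cvg_cst.
  by apply: dlim; rewrite -ltnS.
apply: nearW => k /=.
apply: le_trans (hE N NN0 k) _.
by rewrite ler_wpM2r // ?eps0 // Ck.
Qed.
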